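(* Let $\Gamma=(U\cup V,E)$ be a $3$-regular bipartite graph with $m=|U|=|V|$, and let $\hat\Gamma$ be as described in the context. For any $2$-factor $F$ of $\Gamma$ and any function $f:F\to\{0,1\}$, the set $\mu(F,f)$ contains exactly $2^{2m}$ perfect matchings.
   Context: Construction of $\hat\Gamma$: for each vertex $v$ of $\Gamma$ with neighbours $x,y,z$, there are four inner vertices $a_{v,S}$, one for each subset $S\subseteq\{x,y,z\}$ of even size, and six outer vertices $b_{v,u,0},b_{v,u,1}$ for $u\in\{x,y,z\}$. Within the gadget, $a_{v,S}$ is adjacent to $b_{v,u,1}$ if $u\in S$ and to $b_{v,u,0}$ if $u\notin S$. For each edge $e=\{u,v\}\in E$ and $i\in\{0,1\}$ there is an edge $e_i$ of $\hat\Gamma$ joining $b_{v,u,i}$ and $b_{u,v,i}$. There are no other edges. A perfect matching $\mu$ of $\hat\Gamma$ is uniform if for every $e\in E$ at most one of $e_0,e_1$ is in $\mu$; for such $\mu$, $F_\mu\subseteq E$ is the set of $e\in E$ such that exactly one of $e_0,e_1$ is in $\mu$, and $f_\mu:F_\mu\to\{0,1\}$ is given by $f_\mu(e)=i$ iff $e_i\in\mu$. A $2$-factor of $\Gamma$ is a set $F\subseteq E$ such that every vertex of $\Gamma$ is incident to exactly two edges of $F$. For a $2$-factor $F$ and $f:F\to\{0,1\}$, $\mu(F,f)$ denotes the set of (uniform) perfect matchings $\mu$ of $\hat\Gamma$ with $F_\mu=F$ and $f_\mu=f$. *)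

(* Defs.v *)
From mathcomp Require Import all_boot.
Set Implicit Arguments. Unset Strict Implicit. Unset Printing Implicit Defensive.

Section Hat.
Variables (T : finType) (e : rel T).

Definition Gedge (A : {set T}) : bool :=
  [exists u, exists v, e u v && (A == [set u; v])].

Definition two_factor (F : {set {set T}}) : Prop :=
  (forall A, A \in F -> Gedge A) /\
  (forall v : T, #|[set A in F | v \in A]| = 2).

(* Vertex type of hat Gamma (containing the actual vertices as valid elements):
   inl (v, Sx)    stands for the inner vertex a_{v,S},
   inr (v, u, i) stands for the outer vertex b_{v,u,i}  (i : bool, false = 0, true = 1). *)
Definition hatV : finType := ((T * {set T}) + (T * T * bool))%type.

Definition hat_valid (w : hatV) : bool :=
  match w with
  | inl (v, Sx) => (Sx \subset [set u | e v u]) && ~~ odd #|Sx|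
  | inr (v, u, _) => e v u
  end.

Definition hat_adj1 (w1 w2 : hatV) : bool :=
  match w1, w2 with
  | inl (v, Sx), inr (v', u, i) => (v' == v) && (i == (u \in Sx))
  | inr (v, u, i), inr (u', v', i') => [&& u' == u, v' == v & i' == i]
  | _, _ => false
  end.

Definition hat_adj (w1 w2 : hatV) : bool :=
  [&& hat_valid w1, hat_valid w2 & hat_adj1 w1 w2 || hat_adj1 w2 w1].

Definition hat_edge (B : {set hatV}) : bool :=
  [exists x, exists y, hat_adj x y && (B == [set x; y])].

Definition perfect_matching (M : {set {set hatV}}) : bool :=
  [forall B in M, hat_edge B] &&
  [forall x, hat_valid x ==> (#|[set B in M | x \in B]| == 1)].

(* For an edge A = {u,v} of Gamma and i : bool, the edge e_i = {b_{v,u,i}, b_{u,v,i}}. *)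
Definition e_hat (i : bool) (A : {set T}) : {set hatV} :=
  [set w : hatV | match w with
                  | inr (v, u, j) => [&& j == i, e v u & [set v; u] == A]
                  | inl _ => false
                  end].

Definition uniform (M : {set {set hatV}}) : bool :=
  [forall A, Gedge A ==> ~~ ((e_hat false A \in M) && (e_hat true A \in M))].

Definition F_mu (M : {set {set hatV}}) : {set {set T}} :=
  [set A | Gedge A && ((e_hat false A \in M) (+) (e_hat true A \in M))].

(* f_mu(A) = 1 iff e_1 in mu (meaningful for A in F_mu). *)
Definition f_mu (M : {set {set hatV}}) (A : {set T}) : bool := e_hat true A \in M.

(* mu(F, f) ; f : F -> {0,1} is given as a bool-valued function whose
   values outside F are irrelevant. *)
Definition mu_set (F : {set {set T}}) (f : {set T} -> bool) : {set {set {set hatV}}} :=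
  [set M | [&& perfect_matching M, uniform M, F_mu M == F &
              [forall A in F, f_mu M A == f A]]].

End Hat.

(* Main.v *)
Require Import Defs.
From mathcomp Require Import all_boot.
Set Implicit Arguments. Unset Strict Implicit. Unset Printing Implicit Defensive.


Lemma famcard (T : finType) (G : T -> {set T}) (H : forall v, #|G v| = 2) :
  #|[set g : {ffun T -> T} | [forall v, g v \in G v]]| = 2 ^ #|T|.
Proof.
have := card_family (fun v : T => mem (G v) : pred T).
have -> : foldr muln 1 [seq #|(mem (G x) : pred T)| | x : T] = 2 ^ #|T|.
  rewrite cardE /image_mem; elim: (enum (mem predT)) => //= x s ->. by rewrite H expnS.
move <-. apply: eq_card => g. rewrite inE. apply/forallP/familyP => Hg x; exact: Hg.
Qed.

Lemma set2_eq (X : finType) (p q p' q' : X) :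
  ([set p; q] == [set p'; q']) = ((p == p') && (q == q')) || ((p == q') && (q == p')).
Proof.
apply/idP/idP.
  move/eqP=> H.
  have hp := set21 p q; have hq := set22 p q.
  have hp' := set21 p' q'; have hq' := set22 p' q'.
  rewrite H in hp hq; rewrite -H in hp' hq'.
  clear H; move: hp hq hp' hq'; rewrite !inE.
  case/orP=> /eqP E1; subst.
    case/orP=> /eqP E2; subst; rewrite ?eqxx //=.
    by move=> _ /orP[] /eqP ->; rewrite eqxx.
  case/orP=> /eqP E2; subst; rewrite ?eqxx ?orbT //=.
  by move=> /orP[] /eqP -> _; rewrite eqxx.
by case/orP=> /andP[/eqP -> /eqP ->] //; rewrite setUC.
Qed.

Lemma card3 (X : finType) (x y z : X) (S : {set X}) :
  y != x -> z != x -> z != y -> S \subset [set x; y; z] ->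
  #|S| = (x \in S) + (y \in S) + (z \in S).
Proof.
move=> yx zx zy sub.
rewrite (cardsD1 x) (cardsD1 y) (cardsD1 z) !inE yx zx zy /=.
suff -> : S :\ x :\ y :\ z = set0 by rewrite cards0 addn0 addnA.
apply/setP=> w; rewrite !inE.
case: (w =P z) => //= /eqP wz; case: (w =P y) => //= /eqP wy; case: (w =P x) => //= /eqP wx.
apply/negP => wS; move: (subsetP sub w wS); rewrite !inE.
by rewrite (negbTE wx) (negbTE wy) (negbTE wz).
Qed.

Lemma set3_ext (X : finType) (x y z : X) (S S' : {set X}) :
  S \subset [set x; y; z] -> S' \subset [set x; y; z] ->
  (x \in S) = (x \in S') -> (y \in S) = (y \in S') -> (z \in S) = (z \in S') -> S = S'.
Proof.
move=> s1 s2 hx hy hz; apply/setP => w.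
case: (boolP (w \in [set x; y; z])).
  by rewrite !inE => /orP[/orP[]|] /eqP ->.
move=> wn; apply/idP/idP => wS.
  by move: (subsetP s1 w wS); rewrite (negbTE wn).
by move: (subsetP s2 w wS); rewrite (negbTE wn).
Qed.


Section Main.
Variables (T : finType) (e : rel T).
Hypothesis e_sym : symmetric e.

Definition av (v : T) (S : {set T}) : hatV T := inl (v, S).
Definition bv (v u : T) (i : bool) : hatV T := inr (v, u, i).
Definition N v := [set u | e v u].
Definition validS v (S : {set T}) := (S \subset N v) && ~~ odd #|S|.

Lemma av_bv v S v' u i : (av v S == bv v' u i) = false.
Proof. by []. Qed.
Lemma bv_av v S v' u i : (bv v' u i == av v S) = false.
Proof. by []. Qed.
Lemma av_inj v S v' S' : (av v S == av v' S') = (v == v') && (S == S').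
Proof. by []. Qed.
Lemma bv_inj v u i v' u' i' : (bv v u i == bv v' u' i') = [&& v == v', u == u' & i == i'].
Proof.
apply/eqP/idP => [[-> -> ->]|/and3P[/eqP-> /eqP-> /eqP->]] //; by rewrite !eqxx.
Qed.

Lemma valid_av v S : hat_valid e (av v S) = validS v S.
Proof. by []. Qed.
Lemma valid_bv v u i : hat_valid e (bv v u i) = e v u.
Proof. by []. Qed.

Lemma hat_edgeP B : hat_edge e B ->
  (exists v S u, [/\ validS v S, e v u & B = [set av v S; bv v u (u \in S)]]) \/
  (exists v u i, e v u /\ B = [set bv v u i; bv u v i]).
Proof.
case/existsP => p /existsP [q /andP[Hadj /eqP ->]]; move: Hadj; rewrite /hat_adj.
case: p => [[v S]|[[v u] i]]; case: q => [[v' S']|[[v' u'] i']] //=; rewrite ?andbF //.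
- rewrite orbF => /and3P[H1 H2 /andP[/eqP ? /eqP ?]]; subst.
  by left; exists v, S, u'.
- case/and4P=> H1 H2 /eqP ? /eqP ?; subst.
  by left; exists v', S', u; split=> //; rewrite setUC.
- case/and3P=> H1 H2 /orP[] /and3P[/eqP ? /eqP ? /eqP ?]; subst.
  + by right; eexists _, _, _; split; [exact: H1|].
  + by right; eexists _, _, _; split; [exact: H1|].
Qed.

Lemma hat_edge_I v S u : validS v S -> e v u -> hat_edge e [set av v S; bv v u (u \in S)].
Proof.
move=> HS Hu; apply/existsP; exists (av v S); apply/existsP; exists (bv v u (u \in S)).
by rewrite eqxx andbT /hat_adj valid_av valid_bv HS Hu /= !eqxx.
Qed.

Lemma hat_edge_E v u i : e v u -> hat_edge e [set bv v u i; bv u v i].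
Proof.
move=> Hu; apply/existsP; exists (bv v u i); apply/existsP; exists (bv u v i).
by rewrite eqxx andbT /hat_adj !valid_bv Hu -(e_sym v u) Hu /= !eqxx.
Qed.

Lemma ehatE v u i : e v u -> e_hat e i [set v; u] = [set bv v u i; bv u v i].
Proof.
move=> Hu; apply/setP => w; rewrite !inE.
case: w => [[v' S']|[[v' u'] j]] //=.
rewrite set2_eq (bv_inj v' u' j v u i) (bv_inj v' u' j u v i).
have key : (v' == v) && (u' == u) || (v' == u) && (u' == v) -> e v' u'.
  by case/orP=> /andP[/eqP-> /eqP->] //; rewrite e_sym.
case: (j == i); rewrite ?andbF ?andbT //=.
by apply/andP/idP => [[]|H] //; split => //; exact: key.
Qed.

Section PM.
Variable M : {set {set hatV T}}.
Hypothesis pm : perfect_matching e M.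

Lemma pm_edge B : B \in M -> hat_edge e B.
Proof. by case/andP: pm => /forallP H _ BM; move: (H B); rewrite BM. Qed.

Lemma pm_card w : hat_valid e w -> #|[set B in M | w \in B]| = 1.
Proof. by case/andP: pm => _ /forallP H Hw; move: (H w); rewrite Hw => /eqP. Qed.

Lemma pm_ex w : hat_valid e w -> exists2 B, B \in M & w \in B.
Proof.
move=> /pm_card /eqP /cards1P [B HB].
have : B \in [set B0 in M | w \in B0] by rewrite HB set11.
by rewrite inE => /andP[H1 H2]; exists B.
Qed.

Lemma pm_uniq w B1 B2 : hat_valid e w -> B1 \in M -> B2 \in M -> w \in B1 -> w \in B2 -> B1 = B2.
Proof.
move=> /pm_card /eqP /cards1P [B HB] H1 H2 w1 w2.
have : B1 \in [set B0 in M | w \in B0] by rewrite inE H1 w1.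
have : B2 \in [set B0 in M | w \in B0] by rewrite inE H2 w2.
by rewrite HB !inE => /eqP -> /eqP ->.
Qed.
End PM.

Lemma pm_intro (M : {set {set hatV T}}) :
  (forall B, B \in M -> hat_edge e B) ->
  (forall w, hat_valid e w -> exists B0, [/\ B0 \in M, w \in B0 &
       forall B, B \in M -> w \in B -> B = B0]) ->
  perfect_matching e M.
Proof.
move=> H1 H2; apply/andP; split; first by apply/forallP => B; apply/implyP; exact: H1.
apply/forallP => w; apply/implyP => /H2 [B0 [B0M wB0 U]].
apply/cards1P; exists B0; apply/setP => B; rewrite !inE.
apply/andP/eqP; first by case=> ? ?; exact: U.
by move=> ->.
Qed.

Lemma hat_edge_valid B : hat_edge e B -> exists2 w, hat_valid e w & w \in B.
Proof.
case/hat_edgeP => [[v [S [u [HS Hu ->]]]]|[v [u [i [Hu ->]]]]].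
  by exists (av v S); rewrite ?set21.
by exists (bv v u i); rewrite ?set21.
Qed.

Lemma pm_sub (M M' : {set {set hatV T}}) :
  perfect_matching e M -> perfect_matching e M' -> M \subset M' -> M = M'.
Proof.
move=> pm pm' sub; apply/eqP; rewrite eqEsubset sub /=.
apply/subsetP => B BM'.
have [w Hw wB] := hat_edge_valid (pm_edge pm' BM').
have [B1 B1M wB1] := pm_ex pm Hw.
by rewrite (pm_uniq pm' Hw BM' (subsetP sub _ B1M) wB wB1).
Qed.

End Main.


Section Main3.
Variables (T : finType) (e : rel T).
Hypothesis e_sym : symmetric e.
Hypothesis e_irr : irreflexive e.
Hypothesis cubic : forall v : T, #|[set u | e v u]| = 3.
Variable F : {set {set T}}.
Hypothesis HF : two_factor e F.
Variable f : {set T} -> bool.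

Definition NF v := [set u | e v u && ([set v; u] \in F)].
Definition ca v u := ~~ f [set v; u].

Lemma F_form A : A \in F -> exists v u, e v u /\ A = [set v; u].
Proof.
case: HF => H _ /H /existsP [v /existsP [u /andP[Hu /eqP ->]]]; by exists v, u.
Qed.

Lemma NF_card v : #|NF v| = 2.
Proof.
case: HF => _ H2; rewrite -(H2 v).
have -> : [set A in F | v \in A] = [set [set v; u] | u in NF v].
  apply/setP => A; rewrite !inE; apply/andP/imsetP.
    case=> AF; have [p [q [Hpq EA]]] := F_form AF; rewrite EA !inE => /orP[] /eqP Ev.
      exists q; last by rewrite Ev.
      by rewrite inE Ev Hpq -EA AF.
    exists p; last by rewrite Ev setUC.
    by rewrite inE Ev e_sym Hpq setUC -EA AF.
  by case=> u; rewrite inE => /andP[_ H] ->; rewrite H set21.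
rewrite card_in_imset // => u u' _ _ /eqP; rewrite set2_eq eqxx /=.
by case/orP => [/eqP|/andP[/eqP <- /eqP]].
Qed.

Lemma NF_sub v : NF v \subset N e v.
Proof. by apply/subsetP => u; rewrite !inE => /andP[]. Qed.

Lemma labels v x : x \in NF v -> exists y z,
  [/\ y != x, z != x, z != y, N e v = [set x; y; z] & NF v = [set x; y]].
Proof.
move=> xN.
have : #|NF v :\ x| = 1 by have := NF_card v; rewrite (cardsD1 x) xN => -[].
move/eqP/cards1P => [y Hy].
have : y \in NF v :\ x by rewrite Hy set11.
rewrite inE => /andP[yx yN].
have EF : NF v = [set x; y] by rewrite -(setD1K xN) Hy.
have : #|N e v :\: NF v| = 1.
  by rewrite cardsDS ?NF_sub // NF_card /N cubic.
move/eqP/cards1P => [z Hz].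
have : z \in N e v :\: NF v by rewrite Hz set11.
rewrite inE EF !inE negb_or => /andP[/andP[zx zy] zN].
exists y, z; split => //; first by move: yx; rewrite inE.
rewrite -(setID (N e v) (NF v)) Hz (setIidPr (NF_sub v)) EF.
by apply/setP => w; rewrite !inE; case: (w == x); case: (w == y); case: (w == z).
Qed.

Lemma Gedge2 v u : e v u -> Gedge e [set v; u].
Proof. by move=> H; apply/existsP; exists v; apply/existsP; exists u; rewrite H eqxx. Qed.

Lemma NF_sym v u : (u \in NF v) = (v \in NF u).
Proof. by rewrite !inE e_sym setUC. Qed.

Lemma ca_sym v u : ca v u = ca u v.
Proof. by rewrite /ca setUC. Qed.

Lemma inF v u : ([set v; u] \in F) = (u \in NF v).
Proof.
rewrite inE; case: (boolP ([set v; u] \in F)); rewrite ?andbF ?andbT //.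
by move/F_form => [p [q [H /eqP]]]; rewrite set2_eq => /orP[] /andP[/eqP-> /eqP->] //; rewrite e_sym.
Qed.

Section InMu.
Variable M : {set {set hatV T}}.
Hypothesis HM : M \in mu_set e F f.

Lemma mu_pm : perfect_matching e M.
Proof. by move: HM; rewrite inE => /and4P[]. Qed.

Lemma mu_ehat v u i : e v u ->
  (e_hat e i [set v; u] \in M) = (u \in NF v) && (i == f [set v; u]).
Proof.
move=> Hu; move: HM; rewrite inE => /and4P[_ /forallP Hun /eqP HFm /forallP Hf].
rewrite -inF; have G := Gedge2 Hu.
case: (boolP ([set v; u] \in F)) => AF /=.
  move: (Hf [set v; u]); rewrite AF /f_mu /= => /eqP Ht.
  have : [set v; u] \in F_mu e M by rewrite HFm.
  rewrite inE G /= Ht.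
  case: i; first by rewrite Ht.
  by case: (f _); case: (e_hat e false _ \in M).
have : [set v; u] \notin F_mu e M by rewrite HFm.
rewrite inE G /= => Hx; move: (Hun [set v; u]); rewrite G /=.
by move: Hx; case: i; case: (e_hat e true _ \in M); case: (e_hat e false _ \in M).
Qed.

End InMu.

End Main3.


Definition mk3 (X : finType) (x y z : X) (bx by' bz : bool) : {set X} :=
  [set w | [|| (w == x) && bx, (w == y) && by' | (w == z) && bz]].

Section RDef.
Variables (T : finType) (e : rel T) (F : {set {set T}}) (f : {set T} -> bool).
Definition Rf v x0 (S : {set T}) u := ((u == x0) == (S \subset NF e F v)) && ((u \in S) == ca f v u).
Definition R v x0 (S : {set T}) u := if u \in NF e F v then Rf v x0 S u
   else [forall u', (u' \in NF e F v) ==> ~~ Rf v x0 S u'].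
End RDef.

Section Gadget.
Variables (T : finType) (e : rel T).
Variable F : {set {set T}}.
Variable f : {set T} -> bool.
Variables (v x y z : T).
Hypotheses (yx : y != x) (zx : z != x) (zy : z != y).
Hypothesis HN : N e v = [set x; y; z].
Hypothesis HNF : NF e F v = [set x; y].


Lemma subS S : validS e v S -> S \subset [set x; y; z].
Proof. by rewrite -HN => /andP[]. Qed.

Lemma parity S : validS e v S -> (z \in S) = (x \in S) (+) (y \in S).
Proof.
move=> HS; have := HS; case/andP => _; rewrite (card3 yx zx zy (subS HS)) !oddD !oddb.
by case: (x \in S); case: (y \in S); case: (z \in S).
Qed.

Lemma sub_NF S : validS e v S -> (S \subset NF e F v) = (z \notin S).
Proof.
move=> HS; rewrite HNF; apply/idP/idP.
  by move=> sub; apply/negP => /(subsetP sub); rewrite !inE (negbTE zx) (negbTE zy).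
move=> zS; apply/subsetP => w wS; move: (subsetP (subS HS) w wS); rewrite !inE.
by case/orP => // /eqP Ew; rewrite -Ew wS in zS.
Qed.

Lemma Rloc S u : validS e v S -> R e F f v x S u =
  let A := ~~ (z \in S) && ((x \in S) == ca f v x) in
  let B := (z \in S) && ((y \in S) == ca f v y) in
  if u == x then A else if u == y then B else ~~ A && ~~ B.
Proof.
move=> HS /=; rewrite /R /Rf sub_NF // HNF !inE.
case: (eqVneq u x) => [->|ux] /=; first by case: (z \in S).
case: (eqVneq u y) => [->|uy] /=; first by case: (z \in S).
apply/forallP/andP.
  move=> H; split.
    by move: (H x); rewrite !inE eqxx.
  by move: (H y); rewrite !inE eqxx orbT (negbTE yx) /=; case: (z \in S).
case=> H1 H2 u'; rewrite !inE.
case: (eqVneq u' x) => [->|_] /=; first by move: H1; case: (z \in S).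
case: (eqVneq u' y) => [->|_] //=; by move: H2; case: (z \in S).
Qed.

Lemma mk3_x bx by' bz : (x \in mk3 x y z bx by' bz) = bx.
Proof. by rewrite inE eqxx eq_sym (negbTE yx) eq_sym (negbTE zx) /= orbF. Qed.
Lemma mk3_y bx by' bz : (y \in mk3 x y z bx by' bz) = by'.
Proof. by rewrite inE eqxx (negbTE yx) eq_sym (negbTE zy) /= orbF. Qed.
Lemma mk3_z bx by' bz : (z \in mk3 x y z bx by' bz) = bz.
Proof. by rewrite inE eqxx (negbTE zx) (negbTE zy). Qed.

Lemma mk3_valid bx by' : validS e v (mk3 x y z bx by' (bx (+) by')).
Proof.
have sub : mk3 x y z bx by' (bx (+) by') \subset [set x; y; z].
  by apply/subsetP => w; rewrite !inE => /or3P[] /andP[-> _]; rewrite ?orbT.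
rewrite /validS HN sub (card3 yx zx zy sub) mk3_x mk3_y mk3_z !oddD !oddb.
by clear sub; case: bx; case: by'.
Qed.

Lemma valid_ext S S' : validS e v S -> validS e v S' ->
  (x \in S) = (x \in S') -> (y \in S) = (y \in S') -> S = S'.
Proof.
move=> H H' hx hy; apply: (set3_ext (subS H) (subS H')) => //.
by rewrite !parity // hx hy.
Qed.

Lemma valid_ext_xz S S' : validS e v S -> validS e v S' ->
  (x \in S) = (x \in S') -> (z \in S) = (z \in S') -> S = S'.
Proof.
move=> H H' hx hz; apply: valid_ext => //.
move: hz; rewrite !parity // hx.
by case: (x \in S'); case: (y \in S); case: (y \in S').
Qed.

Lemma valid_ext_yz S S' : validS e v S -> validS e v S' ->
  (y \in S) = (y \in S') -> (z \in S) = (z \in S') -> S = S'.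
Proof.
move=> H H' hy hz; apply: valid_ext => //.
move: hz; rewrite !parity // hy.
by case: (y \in S'); case: (x \in S); case: (x \in S').
Qed.

Lemma uniqS (P : {set T} -> bool) bx by' :
  (forall S, validS e v S -> P S = ((x \in S) == bx) && ((y \in S) == by')) ->
  exists S0, [/\ validS e v S0, P S0 & forall S, validS e v S -> P S -> S = S0].
Proof.
move=> HP; exists (mk3 x y z bx by' (bx (+) by')); split.
- exact: mk3_valid.
- by rewrite HP ?mk3_valid // mk3_x mk3_y !eqxx.
- move=> S HS; rewrite HP // => /andP[/eqP hx /eqP hy].
  by apply: valid_ext => //; [exact: mk3_valid | rewrite mk3_x | rewrite mk3_y].
Qed.

End Gadget.


Lemma pick3 (X : finType) (x y z : X) (P : X -> bool) (a b : bool) :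
  y != x -> z != x -> z != y ->
  P x = a -> P y = b -> P z = ~~ a && ~~ b -> ~~ (a && b) ->
  exists u0, [/\ u0 \in [set x; y; z], P u0 & forall u, u \in [set x; y; z] -> P u -> u = u0].
Proof.
move=> yx zx zy Px Py Pz.
case: a Px Pz; case: b Py => //= Py Px Pz _.
- exists x; split; rewrite ?inE ?eqxx //.
  by move=> u; rewrite !inE => /orP[/orP[]|] /eqP -> //; rewrite ?Py ?Pz.
- exists y; split; rewrite ?inE ?eqxx ?orbT //.
  by move=> u; rewrite !inE => /orP[/orP[]|] /eqP -> //; rewrite ?Px ?Pz.
- exists z; split; rewrite ?inE ?eqxx ?orbT //.
  by move=> u; rewrite !inE => /orP[/orP[]|] /eqP -> //; rewrite ?Px ?Py.
Qed.

Section Local.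
Variables (T : finType) (e : rel T).
Variable F : {set {set T}}.
Variable f : {set T} -> bool.
Variables (v x y z : T).
Hypotheses (yx : y != x) (zx : z != x) (zy : z != y).
Hypothesis HN : N e v = [set x; y; z].
Hypothesis HNF : NF e F v = [set x; y].

Lemma A_inner S : validS e v S -> exists u0,
  [/\ e v u0, R e F f v x S u0 & forall u, e v u -> R e F f v x S u -> u = u0].
Proof.
move=> HS.
have [||||u0 [u0N Ru0 Hu]] := pick3 (P := R e F f v x S)
   (a := ~~ (z \in S) && ((x \in S) == ca f v x)) (b := (z \in S) && ((y \in S) == ca f v y)) yx zx zy.
- by rewrite (Rloc f yx zx zy HN HNF) //= eqxx.
- by rewrite (Rloc f yx zx zy HN HNF) //= (negbTE yx) eqxx.
- by rewrite (Rloc f yx zx zy HN HNF) //= (negbTE zx) (negbTE zy).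
- by case: (z \in S); rewrite ?andbF.
exists u0; split => //.
  by move: u0N; rewrite -HN inE.
by move=> u Hu' Ru; apply: Hu => //; rewrite -HN inE.
Qed.

Lemma A_outer u i : e v u -> ~~ ((u \in NF e F v) && (i == f [set v; u])) ->
  exists S0, [/\ validS e v S0, (u \in S0) = i, R e F f v x S0 u &
      forall S, validS e v S -> (u \in S) = i -> R e F f v x S u -> S = S0].
Proof.
move=> Hu Hi.
have : u \in [set x; y; z] by rewrite -HN inE.
rewrite !inE => /orP[/orP[]|] /eqP Eu; subst u.
- have ci : i = ca f v x.
    by move: Hi; rewrite HNF !inE eqxx /= /ca; case: i; case: (f _).
  have [|S0 [H1 H2 H3]] := uniqS yx zx zy HN (P := fun S => ((x \in S) == i) && R e F f v x S x) (bx := ca f v x) (by' := ca f v x).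
    move=> S HS; rewrite (Rloc f yx zx zy HN HNF) //= eqxx (parity yx zx zy HN HS) ci.
    by case: (x \in S); case: (y \in S); case: (ca f v x).
  exists S0; split => //; first by case/andP: H2 => /eqP.
    by case/andP: H2.
  by move=> S HS Hs Rs; apply: H3 => //; rewrite Hs eqxx.
- have ci : i = ca f v y.
    by move: Hi; rewrite HNF !inE eqxx orbT /= /ca; case: i; case: (f _).
  have [|S0 [H1 H2 H3]] := uniqS yx zx zy HN (P := fun S => ((y \in S) == i) && R e F f v x S y) (bx := ~~ ca f v y) (by' := ca f v y).
    move=> S HS; rewrite (Rloc f yx zx zy HN HNF) //= (negbTE yx) eqxx (parity yx zx zy HN HS) ci.
    by case: (x \in S); case: (y \in S); case: (ca f v y).
  exists S0; split => //; first by case/andP: H2 => /eqP.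
    by case/andP: H2.
  by move=> S HS Hs Rs; apply: H3 => //; rewrite Hs eqxx.
- have [|S0 [H1 H2 H3]] := uniqS yx zx zy HN (P := fun S => ((z \in S) == i) && R e F f v x S z)
     (bx := if i then ca f v y else ~~ ca f v x) (by' := if i then ~~ ca f v y else ~~ ca f v x).
    move=> S HS; rewrite (Rloc f yx zx zy HN HNF) //= (negbTE zx) (negbTE zy) (parity yx zx zy HN HS).
    by clear Hi; case: (x \in S); case: (y \in S); case: (ca f v x); case: (ca f v y); case: i.
  exists S0; split => //; first by case/andP: H2 => /eqP.
    by case/andP: H2.
  by move=> S HS Hs Rs; apply: H3 => //; rewrite Hs eqxx.
Qed.

End Local.


Section PhiSec.
Variables (T : finType) (e : rel T).
Hypothesis e_sym : symmetric e.
Hypothesis e_irr : irreflexive e.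
Hypothesis cubic : forall v : T, #|[set u | e v u]| = 3.
Variable F : {set {set T}}.
Hypothesis HF : two_factor e F.
Variable f : {set T} -> bool.

Lemma edge_at_a B v S : hat_edge e B -> av v S \in B ->
  validS e v S /\ exists u, e v u /\ B = [set av v S; bv v u (u \in S)].
Proof.
case/hat_edgeP => [[v' [S' [u' [HS Hu ->]]]]|[v' [u' [i' [Hu ->]]]]]; rewrite !inE.
  by rewrite av_inj av_bv orbF => /andP[/eqP -> /eqP ->]; split => //; exists u'.
by rewrite !av_bv.
Qed.

Lemma edge_at_b B v u i : hat_edge e B -> bv v u i \in B ->
  (e v u /\ B = [set bv v u i; bv u v i]) \/
  (exists S, [/\ validS e v S, e v u, (u \in S) = i & B = [set av v S; bv v u i]]).
Proof.
case/hat_edgeP => [[v' [S' [u' [HS Hu ->]]]]|[v' [u' [i' [Hu ->]]]]]; rewrite !inE.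
  rewrite bv_av bv_inj /= => /and3P[/eqP ? /eqP ? /eqP ?]; subst.
  by right; exists S'.
rewrite !bv_inj => /orP[] /and3P[/eqP ? /eqP ? /eqP ?]; subst; left; split => //.
  by rewrite e_sym.
by rewrite setUC.
Qed.

Definition Phi (g : {ffun T -> T}) : {set {set hatV T}} :=
  [set B : {set hatV T} | [exists A in F, B == e_hat e (f A) A] ||
     [exists v, exists S, exists u, [&& validS e v S, e v u, R e F f v (g v) S u &
        B == [set av v S; bv v u (u \in S)]]]].

Variable g : {ffun T -> T}.
Hypothesis Hg : forall v, g v \in NF e F v.

Lemma Phi_edge B : B \in Phi g -> hat_edge e B.
Proof.
rewrite inE => /orP[/existsP [A /andP[AF /eqP ->]]|].
  have [p [q [Hpq ->]]] := F_form HF AF.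
  by rewrite (ehatE e_sym _ Hpq); apply: hat_edge_E.
case/existsP => v /existsP [S /existsP [u /and4P[HS Hu _ /eqP ->]]].
exact: hat_edge_I.
Qed.

Lemma av_ehat v S i A : (av v S \in e_hat e i A) = false.
Proof. by rewrite inE. Qed.

Lemma PhiI v S u : validS e v S -> e v u ->
  ([set av v S; bv v u (u \in S)] \in Phi g) = R e F f v (g v) S u.
Proof.
move=> HS Hu; apply/idP/idP.
  rewrite inE => /orP[/existsP [A /andP[AF /eqP EA]]|].
    by have := set21 (av v S) (bv v u (u \in S)); rewrite EA av_ehat.
  case/existsP => v' /existsP [S' /existsP [u' /and4P[HS' Hu' HR /eqP]]].
  move/eqP; rewrite set2_eq av_bv /= orbF av_inj bv_inj => /andP[/andP[/eqP ? /eqP ?] /and3P[_ /eqP ? _]].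
  by subst.
move=> HR; rewrite inE; apply/orP; right.
apply/existsP; exists v; apply/existsP; exists S; apply/existsP; exists u.
by rewrite HS Hu HR eqxx.
Qed.

Lemma PhiE v u i : e v u ->
  ([set bv v u i; bv u v i] \in Phi g) = (u \in NF e F v) && (i == f [set v; u]).
Proof.
move=> Hu; rewrite -(ehatE e_sym _ Hu); apply/idP/idP.
  rewrite inE => /orP[/existsP [A /andP[AF /eqP EA]]|].
    have [p [q [Hpq EA']]] := F_form HF AF.
    have := set21 (bv v u i) (bv u v i).
    rewrite -(ehatE e_sym _ Hu) EA EA' (ehatE e_sym _ Hpq) !inE !bv_inj.
    case/orP => /and3P[/eqP ? /eqP ? /eqP Ei]; subst.
      by rewrite Hu AF eqxx.
    by rewrite Hu; move: AF; rewrite setUC => ->; rewrite setUC eqxx.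
  case/existsP => v' /existsP [S' /existsP [u' /and4P[HS' Hu' HR /eqP EB]]].
  by have := set21 (av v' S') (bv v' u' (u' \in S')); rewrite -EB av_ehat.
case/andP => uN /eqP ->; rewrite inE; apply/orP; left.
by apply/existsP; exists [set v; u]; rewrite (inF e_sym HF) uN eqxx.
Qed.

End PhiSec.


Section PhiMu.
Variables (T : finType) (e : rel T).
Hypothesis e_sym : symmetric e.
Hypothesis e_irr : irreflexive e.
Hypothesis cubic : forall v : T, #|[set u | e v u]| = 3.
Variable F : {set {set T}}.
Hypothesis HF : two_factor e F.
Variable f : {set T} -> bool.
Variable g : {ffun T -> T}.
Hypothesis Hg : forall v, g v \in NF e F v.

Notation Phi := (Phi e F f).

Lemma Phi_pm : perfect_matching e (Phi g).
Proof.
apply: pm_intro; first exact: (Phi_edge e_sym HF).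
case => [[v S]|[[v u] i]].
  rewrite -/(av v S) valid_av => HS.
  have [y [z [yx zx zy HN HNF]]] := labels e_sym cubic HF (Hg v).
  have [u0 [Hu0 Ru0 U0]] := A_inner f yx zx zy HN HNF HS.
  exists [set av v S; bv v u0 (u0 \in S)]; split.
  - by rewrite (PhiI F f g).
  - by rewrite set21.
  - move=> B BP aB; have [_ [u [Hu EB]]] := edge_at_a (Phi_edge e_sym HF BP) aB.
    by move: BP; rewrite EB (PhiI F f g) // => /(U0 _ Hu) ->.
rewrite -/(bv v u i) valid_bv => Hu.
case: (boolP ((u \in NF e F v) && (i == f [set v; u]))) => Hi.
  exists [set bv v u i; bv u v i]; split.
  - by rewrite (PhiE e_sym HF f g).
  - by rewrite set21.
  - move=> B BP bB; case: (edge_at_b e_sym (Phi_edge e_sym HF BP) bB) => [[_ ->] //|].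
    case=> S [HS _ uS EB]; move: BP; rewrite EB -uS (PhiI F f g) // /R.
    case/andP: Hi => uN /eqP fi; rewrite uN /Rf /ca uS fi.
    by case: (f _); rewrite andbF.
have [y [z [yx zx zy HN HNF]]] := labels e_sym cubic HF (Hg v).
have [S0 [HS0 uS0 RS0 U0]] := A_outer yx zx zy HN HNF Hu Hi.
exists [set av v S0; bv v u i]; split.
- by rewrite -uS0 (PhiI F f g).
- by rewrite set22.
- move=> B BP bB; case: (edge_at_b e_sym (Phi_edge e_sym HF BP) bB).
    case=> _ EB; move: BP; rewrite EB (PhiE e_sym HF f g) // => H.
    by rewrite H in Hi.
  case=> S [HS _ uS EB]; move: BP; rewrite EB -uS (PhiI F f g) // => HR.
  by rewrite (U0 S HS uS HR).
Qed.

Lemma Phi_mu : Phi g \in mu_set e F f.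
Proof.
rewrite inE Phi_pm /=.
have key : forall A i, Gedge e A -> (e_hat e i A \in Phi g) = (A \in F) && (i == f A).
  move=> A i /existsP [p /existsP [q /andP[Hpq /eqP ->]]].
  by rewrite (ehatE e_sym _ Hpq) (PhiE e_sym HF f g) // (inF e_sym HF).
apply/and3P; split.
- apply/forallP => A; apply/implyP => GA; rewrite !key //.
  by case: (A \in F); case: (f A).
- apply/eqP/setP => A; rewrite inE.
  case: (boolP (Gedge e A)) => GA /=.
    by rewrite !key //; case: (A \in F); case: (f A).
  apply/esym/negP => AF; case: HF => H _; by rewrite (H A AF) in GA.
- apply/forallP => A; apply/implyP => AF.
  case: HF => H _; by rewrite /f_mu key ?H // AF eqxx.
Qed.

End PhiMu.


Section PartB.
Variables (T : finType) (e : rel T).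
Hypothesis e_sym : symmetric e.
Hypothesis e_irr : irreflexive e.
Hypothesis cubic : forall v : T, #|[set u | e v u]| = 3.
Variable F : {set {set T}}.
Hypothesis HF : two_factor e F.
Variable f : {set T} -> bool.
Variable M : {set {set hatV T}}.
Hypothesis HM : M \in mu_set e F f.

Let pm := mu_pm HM.

Lemma M1 v u i : e v u -> ~~ ((u \in NF e F v) && (i == f [set v; u])) ->
  exists S, [/\ validS e v S, (u \in S) = i & [set av v S; bv v u i] \in M].
Proof.
move=> Hu Hi; have [B BM bB] := pm_ex pm (w := bv v u i) Hu.
case: (edge_at_b e_sym (pm_edge pm BM) bB) => [[_ EB]|[S [HS _ uS EB]]].
  by move: BM; rewrite EB -(ehatE e_sym _ Hu) (mu_ehat e_sym HF HM) // => H; rewrite H in Hi.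
by exists S; rewrite -EB.
Qed.

Lemma M2 v S u u' : validS e v S ->
  [set av v S; bv v u (u \in S)] \in M -> [set av v S; bv v u' (u' \in S)] \in M -> u = u'.
Proof.
move=> HS H1 H2.
have := pm_uniq pm (w := av v S) HS H1 H2 (set21 _ _) (set21 _ _).
move/eqP; rewrite set2_eq av_bv /= orbF eqxx bv_inj /=.
by case/and3P => _ /eqP.
Qed.

Lemma M3 v S S' u i : e v u ->
  [set av v S; bv v u i] \in M -> [set av v S'; bv v u i] \in M -> S = S'.
Proof.
move=> Hu H1 H2.
have := pm_uniq pm (w := bv v u i) Hu H1 H2 (set22 _ _) (set22 _ _).
move/eqP; rewrite set2_eq av_inj bv_av /= orbF.
by case/andP => /andP[_ /eqP].
Qed.

Lemma M4 v S u : u \in NF e F v ->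
  [set av v S; bv v u (u \in S)] \in M -> (u \in S) = ca f v u.
Proof.
move=> uN H1; have Hu : e v u by move: uN; rewrite inE => /andP[].
rewrite /ca; case: (boolP ((u \in S) == f [set v; u])) => [/eqP Eq|]; last first.
  by case: (u \in S); case: (f _).
have H2 : [set bv v u (u \in S); bv u v (u \in S)] \in M.
  by rewrite -(ehatE e_sym _ Hu) (mu_ehat e_sym HF HM) // uN Eq eqxx.
have := pm_uniq pm (w := bv v u (u \in S)) Hu H1 H2 (set22 _ _) (set21 _ _).
by move=> E; have := set21 (av v S) (bv v u (u \in S)); rewrite E !inE !av_bv.
Qed.

Section Labels.
Variables (v x y z : T).
Hypotheses (yx : y != x) (zx : z != x) (zy : z != y).
Hypothesis HN : N e v = [set x; y; z].
Hypothesis HNF : NF e F v = [set x; y].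

Lemma eN w : w \in [set x; y; z] -> e v w.
Proof. by rewrite -HN inE. Qed.

Lemma xNF : x \in NF e F v. Proof. by rewrite HNF set21. Qed.
Lemma yNF : y \in NF e F v. Proof. by rewrite HNF set22. Qed.
Lemma zNF : z \notin NF e F v.
Proof. by rewrite HNF !inE (negbTE zx) (negbTE zy). Qed.

Lemma B_core Sx Sy : validS e v Sx -> validS e v Sy ->
  [set av v Sx; bv v x (x \in Sx)] \in M -> [set av v Sy; bv v y (y \in Sy)] \in M ->
  z \notin Sx -> z \in Sy ->
  forall S u, validS e v S -> e v u -> [set av v S; bv v u (u \in S)] \in M ->
  R e F f v x S u.
Proof.
move=> HSx HSy Ex Ey zSx zSy S u HS Hu EM.
rewrite (Rloc f yx zx zy HN HNF) //=.
have : u \in [set x; y; z] by rewrite -HN inE.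
rewrite !inE => /orP[/orP[]|] /eqP Eu; subst u.
- rewrite eqxx (M4 xNF EM) eqxx andbT.
  have := M4 xNF Ex; rewrite -(M4 xNF EM) => Eb.
  have Ex' : [set av v Sx; bv v x (x \in S)] \in M by rewrite -Eb.
  by rewrite (M3 Hu EM Ex').
- rewrite (negbTE yx) eqxx (M4 yNF EM) eqxx andbT.
  have := M4 yNF Ey; rewrite -(M4 yNF EM) => Eb.
  have Ey' : [set av v Sy; bv v y (y \in S)] \in M by rewrite -Eb.
  by rewrite (M3 Hu EM Ey').
- rewrite (negbTE zx) (negbTE zy); apply/andP; split.
    apply/negP => /andP[zS /eqP xS].
    have ESx : S = Sx.
      apply: (valid_ext_xz yx zx zy HN HS HSx).
        by rewrite xS -(M4 xNF Ex).
      by rewrite (negbTE zS) (negbTE zSx).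
    subst S; have := M2 HSx EM Ex; by move/eqP; rewrite (negbTE zx).
  apply/negP => /andP[zS /eqP yS].
  have ESy : S = Sy.
    apply: (valid_ext_yz yx zx zy HN HS HSy).
      by rewrite yS -(M4 yNF Ey).
    by rewrite zS zSy.
  subst S; have := M2 HSy EM Ey; by move/eqP; rewrite (negbTE zy).
Qed.

Lemma B_claim Sx Sy : validS e v Sx -> validS e v Sy ->
  [set av v Sx; bv v x (x \in Sx)] \in M -> [set av v Sy; bv v y (y \in Sy)] \in M ->
  (z \in Sy) = ~~ (z \in Sx).
Proof.
move=> HSx HSy Ex Ey.
case E: ((z \in Sy) == (z \in Sx)); last by move: E; case: (z \in Sy); case: (z \in Sx).
move/eqP: E => E.
have Hz : e v z by apply: eN; rewrite !inE eqxx !orbT.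
have Hnz : ~~ ((z \in NF e F v) && ((z \in Sx) == f [set v; z])) by rewrite (negbTE zNF).
have [S' [HS' zS' E']] := M1 Hz Hnz.
rewrite -zS' in E'.
case Exy: ((x \in Sx) == (x \in Sy)).
  have ES : Sx = Sy by apply: (valid_ext_xz yx zx zy HN HSx HSy); [exact/eqP|rewrite E].
  subst Sy; have := M2 HSx Ex Ey; by move/eqP; rewrite eq_sym (negbTE yx).
case Exz: ((x \in Sx) == (x \in S')).
  have ES : Sx = S' by apply: (valid_ext_xz yx zx zy HN HSx HS'); [exact/eqP|rewrite zS'].
  subst S'; have := M2 HSx Ex E'; by move/eqP; rewrite eq_sym (negbTE zx).
case Eyz: ((x \in Sy) == (x \in S')).
  have ES : Sy = S' by apply: (valid_ext_xz yx zx zy HN HSy HS'); [exact/eqP|rewrite zS' E].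
  subst S'; have := M2 HSy Ey E'; by move/eqP; rewrite eq_sym (negbTE zy).
by move: Exy Exz Eyz; case: (x \in Sx); case: (x \in Sy); case: (x \in S').
Qed.

End Labels.
Lemma B_local v x y z : y != x -> z != x -> z != y ->
  N e v = [set x; y; z] -> NF e F v = [set x; y] ->
  exists x0, x0 \in NF e F v /\ forall S u, validS e v S -> e v u ->
     [set av v S; bv v u (u \in S)] \in M -> R e F f v x0 S u.
Proof.
move=> yx zx zy HN HNF.
have xN := xNF HNF; have yN := yNF HNF.
have Hx : e v x by move: xN; rewrite inE => /andP[].
have Hy : e v y by move: yN; rewrite inE => /andP[].
have Hnx : ~~ ((x \in NF e F v) && (ca f v x == f [set v; x])) by rewrite /ca; case: (f _); rewrite andbF.
have [Sx [HSx xSx Ex]] := M1 Hx Hnx.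
have Hny : ~~ ((y \in NF e F v) && (ca f v y == f [set v; y])) by rewrite /ca; case: (f _); rewrite andbF.
have [Sy [HSy ySy Ey]] := M1 Hy Hny.
rewrite -xSx in Ex; rewrite -ySy in Ey.
have Cl := B_claim yx zx zy HN HNF HSx HSy Ex Ey.
case zSx: (z \in Sx).
  exists y; split => //.
  have xy : x != y by rewrite eq_sym.
  have HN' : N e v = [set y; x; z].
    by rewrite HN; apply/setP => w; rewrite !inE; case: (w == x); case: (w == y).
  have HNF' : NF e F v = [set y; x] by rewrite HNF setUC.
  by apply: (B_core xy zy zx HN' HNF' HSy HSx Ey Ex); rewrite ?Cl ?zSx.
exists x; split => //.
by apply: (B_core yx zx zy HN HNF HSx HSy Ex Ey); rewrite ?Cl ?zSx.
Qed.

End PartB.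


Section Final.
Variables (T : finType) (e : rel T).
Hypothesis e_sym : symmetric e.
Hypothesis e_irr : irreflexive e.
Hypothesis cubic : forall v : T, #|[set u | e v u]| = 3.
Variable F : {set {set T}}.
Hypothesis HF : two_factor e F.
Variable f : {set T} -> bool.

Lemma B_exists M : M \in mu_set e F f ->
  exists2 g : {ffun T -> T}, (forall v, g v \in NF e F v) & M = Phi e F f g.
Proof.
move=> HM.
have H : forall v, exists x0, x0 \in NF e F v /\ forall S u, validS e v S -> e v u ->
     [set av v S; bv v u (u \in S)] \in M -> R e F f v x0 S u.
  move=> v; have : 0 < #|NF e F v| by rewrite (NF_card e_sym HF).
  case/card_gt0P => x xN.
  have [y [z [yx zx zy HN HNF]]] := labels e_sym cubic HF xN.
  exact: (B_local e_sym HF HM yx zx zy HN HNF).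
have [g0 Hg0] := fin_all_exists H.
exists [ffun v => g0 v]; first by move=> v; rewrite ffunE; case: (Hg0 v).
have Hg : forall v, [ffun v => g0 v] v \in NF e F v by move=> v; rewrite ffunE; case: (Hg0 v).
apply: (pm_sub (mu_pm HM) (Phi_pm e_sym cubic HF f Hg)).
apply/subsetP => B BM; case/hat_edgeP: (pm_edge (mu_pm HM) BM).
  move=> [v [S [u [HS Hu EB]]]]; rewrite EB (PhiI F f) // ffunE.
  by case: (Hg0 v) => _; apply => //; rewrite -EB.
move=> [v [u [i [Hu EB]]]]; rewrite EB (PhiE e_sym HF) //.
by move: BM; rewrite EB -(ehatE e_sym _ Hu) (mu_ehat e_sym HF HM).
Qed.

Lemma Phi_inj (g g' : {ffun T -> T}) : (forall v, g v \in NF e F v) -> (forall v, g' v \in NF e F v) ->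
  Phi e F f g = Phi e F f g' -> g = g'.
Proof.
move=> Hg Hg' E; apply/ffunP => v.
set x := g v; set S := if ca f v x then NF e F v else set0.
have xN : x \in NF e F v by exact: Hg.
have Hx : e v x by move: xN; rewrite inE => /andP[].
have SN : S \subset NF e F v by rewrite /S; case: (ca f v x); rewrite ?sub0set.
have HS : validS e v S.
  rewrite /validS (subset_trans SN (NF_sub e F v)) /S.
  by case: (ca f v x); rewrite ?(NF_card e_sym HF) ?cards0.
have xS : (x \in S) = ca f v x by rewrite /S; case: (ca f v x); rewrite ?xN ?inE.
have : [set av v S; bv v x (x \in S)] \in Phi e F f g.
  by rewrite (PhiI F f) // /R xN /Rf SN xS !eqxx.
rewrite E (PhiI F f) // /R xN /Rf SN xS eqxx andbT.
by rewrite eqb_id => /eqP.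
Qed.

End Final.

Unset Implicit Arguments.

Theorem mainTheorem3 (T : finType) (e : rel T)
  (e_sym : symmetric e) (e_irr : irreflexive e)
  (cubic : forall v : T, #|[set u | e v u]| = 3)
  (U : {set T}) (m : nat)
  (bip : forall x y : T, e x y -> (x \in U) != (y \in U))
  (cardU : #|U| = m) (cardV : #|~: U| = m)
  (F : {set {set T}}) (HF : two_factor e F) (f : {set T} -> bool) :
  #|mu_set e F f| = 2 ^ (2 * m).
Proof.
set P := [set g : {ffun T -> T} | [forall v, g v \in NF e F v]].
have -> : mu_set e F f = Phi e F f @: P.
  apply/setP => M; apply/idP/imsetP.
    move=> HM; have [g Hg ->] := B_exists e_sym cubic HF HM.
    by exists g => //; rewrite inE; apply/forallP.
  case=> g; rewrite inE => /forallP Hg ->.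
  exact: (Phi_mu e_sym cubic HF f Hg).
rewrite card_in_imset; last first.
  move=> g g'; rewrite !inE => /forallP Hg /forallP Hg'.
  exact: (Phi_inj e_sym HF Hg Hg').
rewrite famcard; first by rewrite -(cardsC U) cardU cardV mul2n addnn.
exact: (NF_card e_sym HF).
Qed.
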